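(* Let $P$ be a finite set of points in $\mathbb{R}^2$ in general position, and let $(t,u,v)$ be consecutive vertices (in clockwise order) of the first convex layer of $P$. Let $p\neq q$ be points of $P$ with $p$ in the triangle $\triangle(t,u,v)$ and $q$ in the triangle $\triangle(t,p,v)$. Then $q\notin A(u)$.
   Context: Convex layers: $L^1$ is the set of vertices of the convex hull of $P$, and $L^k$ is the set of vertices of the convex hull of $P\setminus(L^1\cup\dots\cup L^{k-1})$. A point $p$ is active for $u\in L^1$ if, upon deleting $u$ from $P$ and recomputing the first and second convex layers, $p$ moves to the first layer; $A(u)$ is the set of points active for $u$. A point is said to be in a polygon if it lies strictly inside it. *)

(* Defs.v *)
From mathcomp Require Import all_boot all_order all_algebra.
Set Implicit Arguments. Unset Strict Implicit. Unset Printing Implicit Defensive.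
Import Order.TTheory GRing.Theory Num.Theory.
Local Open Scope ring_scope.

Section Geom.
Variable R : realFieldType.
Definition pt := (R * R)%type.

(* twice the signed area of (a,b,c): > 0 iff counterclockwise turn *)
Definition orient (a b c : pt) : R :=
  (b.1 - a.1) * (c.2 - a.2) - (b.2 - a.2) * (c.1 - a.1).

Definition general_position (P : seq pt) : Prop :=
  uniq P /\
  forall a b c, a \in P -> b \in P -> c \in P ->
    a != b -> b != c -> a != c -> orient a b c != 0.

Definition in_conv (S : seq pt) (x : pt) : Prop :=
  exists w : pt -> R,
    (forall y, y \in S -> 0 <= w y) /\
    \sum_(y <- S) w y = 1 /\
    \sum_(y <- S) w y * y.1 = x.1 /\
    \sum_(y <- S) w y * y.2 = x.2.

Definition del (S : seq pt) (x : pt) : seq pt := [seq y <- S | y != x].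

(* x is a vertex of the convex hull of S, i.e. x is in the first convex layer L^1(S) *)
Definition in_L1 (S : seq pt) (x : pt) : Prop :=
  x \in S /\ ~ in_conv (del S x) x.

(* t, u are consecutive vertices of L^1(S) in clockwise order:
   every other vertex of L^1(S) lies strictly to the right of the directed line t -> u *)
Definition cw_next (S : seq pt) (t u : pt) : Prop :=
  in_L1 S t /\ in_L1 S u /\ t != u /\
  forall x, in_L1 S x -> x != t -> x != u -> orient t u x < 0.

Definition in_triangle (a b c x : pt) : Prop :=
  exists la lb lc : R, 0 < la /\ 0 < lb /\ 0 < lc /\ la + lb + lc = 1 /\
    x.1 = la * a.1 + lb * b.1 + lc * c.1 /\
    x.2 = la * a.2 + lb * b.2 + lc * c.2.

(* p is active for u (u in L^1(P)): after deleting u, p moves to the first layer *)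
Definition active (P : seq pt) (u p : pt) : Prop :=
  p \in P /\ ~ in_L1 P p /\ in_L1 (del P u) p.

End Geom.

(* Main.v *)
Require Import Defs.
From mathcomp Require Import all_boot all_order all_algebra.
From mathcomp Require Import ring lra.
Local Open Scope ring_scope.
Import Order.TTheory GRing.Theory Num.Theory.

Lemma sum_ind (R : realFieldType) (S : seq (pt R)) a (F : pt R -> R) :
  uniq S -> a \in S -> \sum_(y <- S) (y == a)%:R * F y = F a.
Proof.
elim: S => // x S IH /= /andP [xS uS]; rewrite in_cons big_cons.
case: eqP => [-> _|/eqP xa /= aS]; last by rewrite eq_sym (negbTE xa) mul0r add0r IH.
rewrite eqxx mul1r big_seq big1 ?addr0 // => y yS.
case: eqP => [E|_]; last by rewrite mul0r.
by move: xS; rewrite -E yS.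

Qed.

Lemma sum3 (R : realFieldType) (S : seq (pt R)) t p v la lb lc (g : pt R -> R) :
  uniq S -> t \in S -> p \in S -> v \in S ->
  \sum_(y <- S) ((la * (y == t)%:R + lb * (y == p)%:R + lc * (y == v)%:R) * g y)
  = la * g t + lb * g p + lc * g v.
Proof.
move=> uS tS pS vS.
rewrite (eq_bigr (fun y => la * ((y == t)%:R * g y) + lb * ((y == p)%:R * g y)
   + lc * ((y == v)%:R * g y))); last by move=> y _; ring.
by rewrite !big_split /= -!mulr_sumr !sum_ind.
Qed.

Theorem lemma1 (R : realFieldType) (P : seq (pt R)) (t u v p q : pt R) :
  general_position P ->
  cw_next P t u -> cw_next P u v -> t != v ->
  p \in P -> q \in P -> p != q ->
  in_triangle t u v p -> in_triangle t p v q ->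
  ~ active P u q.
Proof.
move=> [uP gp] [Lt [Lu [tu _]]] [_ [Lv [uv _]]] tv pP qP pq
  [ma [mb [mc [ma0 [mb0 [mc0 [ms [mx my]]]]]]]]
  [la [lb [lc [la0 [lb0 [lc0 [ls [lx ly]]]]]]]].
have tP := Lt.1. have uP' := Lu.1. have vP := Lv.1.
move=> [_ [nL1 [_ nconv]]].
have neq x : in_L1 P x -> q != x.
  by move=> Lx; apply/eqP => E; apply: nL1; rewrite E.
have qt : q != t by apply: neq.
have qv : q != v by apply: neq.
have pu : p != u.
  apply/eqP => E; subst p.
  have := gp u t v uP' tP vP; rewrite eq_sym => /(_ tu tv uv).
  rewrite /orient => /eqP; apply.
  have h1 : ma * (t.1 - u.1) = - mc * (v.1 - u.1).
    have e : ma*(t.1-u.1) + mc*(v.1-u.1) = (ma*t.1 + mb*u.1 + mc*v.1) - u.1 - (ma+mb+mc-1)*u.1 by ring.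
    rewrite -mx ms !subrr mul0r subr0 in e.
    by apply/eqP; rewrite -subr_eq0 mulNr opprK e.
  have h2 : ma * (t.2 - u.2) = - mc * (v.2 - u.2).
    have e : ma*(t.2-u.2) + mc*(v.2-u.2) = (ma*t.2 + mb*u.2 + mc*v.2) - u.2 - (ma+mb+mc-1)*u.2 by ring.
    rewrite -my ms !subrr mul0r subr0 in e.
    by apply/eqP; rewrite -subr_eq0 mulNr opprK e.
  apply: (@mulfI _ ma); first by rewrite gt_eqF.
  rewrite mulr0 mulrBr mulrA h1 mulrA h2; ring.
set S := del (del P u) q.
have uS : uniq S by rewrite /S /del !filter_uniq.
have mS x : x \in P -> x != u -> x != q -> x \in S.
  by move=> xP xu xq; rewrite /S /del !mem_filter xu xq xP.
have tS : t \in S by apply: mS => //; rewrite eq_sym.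
have vS : v \in S by apply: mS => //; rewrite eq_sym.
have pS : p \in S by apply: mS.
apply: nconv; exists (fun y => la * (y == t)%:R + lb * (y == p)%:R + lc * (y == v)%:R).
split; first by move=> y _; rewrite !addr_ge0 // mulr_ge0 // ?ltW // ler0n.
split; first by have := @sum3 R S t p v la lb lc (fun _ => 1) uS tS pS vS;
  under eq_bigr do rewrite mulr1; rewrite !mulr1 ls.
split; first by rewrite sum3 // lx.
by rewrite sum3 // ly.
Qed.
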